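(* Consider the periodic chain (cycle graph) with sites $1,\dots,N$ (indices mod $N$) and let $S^\dagger_{(2)}=\sum_{i=1}^N s_i^\dagger s_{i+1}^\dagger$. For all positive integers $k,R$ there exists $N_0(k,R)$, independent of $N$, such that for every $N>N_0(k,R)$ the following holds: if $H$ is a $k$-local operator of range at most $R$ on the chain with $H|Q^p\rangle=E_p|Q^p\rangle$ for all $p\in\{0,\dots,L\}$, where $|Q^p\rangle=(S^\dagger_{(2)})^p|\overline 0\rangle$ and $L$ is the largest integer with $|Q^L\rangle\ne0$, then there are constants $\Omega,\omega$ with $E_p=\Omega+\omega p$ for all $p\in\{0,\dots,L\}$. (Equivalently, $S^\dagger_{(2)}$ satisfies properties (P.1), (P.2), (P.3) of Theorem 3 for suitable functions $\alpha,\beta,\gamma$ independent of $N$, with (P.1) holding once $N$ is sufficiently large relative to $R$.)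
   Context: Qubits on sites of the cycle with local basis $|0\rangle,|1\rangle$; $s_i^\dagger$ acts on site $i$ as $s^\dagger|0\rangle=|1\rangle$, $s^\dagger|1\rangle=0$, $s_i=(s_i^\dagger)^\dagger$; $|\overline 0\rangle=|0\rangle^{\otimes N}$. Distance is graph distance on the cycle. Every operator has a unique expansion in normal-ordered strings $s^\dagger_{j_1}\cdots s^\dagger_{j_n}s_{k_1}\cdots s_{k_m}$ (the $j$'s pairwise distinct, the $k$'s pairwise distinct); a string has range $R$ where $R$ is the smallest positive integer with all pairwise distances between its sites $<R$; an operator has range at most $R$ if all its strings with nonzero coefficient do, and is $k$-local if each such string involves at most $k$ sites. Operators need not be Hermitian. *)

(* Defs.v *)
From HB Require Import structures.
From mathcomp Require Import all_boot all_order all_algebra.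
Set Implicit Arguments. Unset Strict Implicit. Unset Printing Implicit Defensive.
Import Order.TTheory GRing.Theory Num.Theory.
Local Open Scope ring_scope.

(* Qubits on the cycle with sites 'I_N (site i+1 is [ordS i], i.e. (i+1) mod N).
   Computational basis state |x> is labelled by the set x : {set 'I_N} of sites
   in state |1>. *)
Section Chain.
Variable C : numClosedFieldType.
Variable N : nat.

Definition site := 'I_N.
Definition state := {ffun {set 'I_N} -> C}.

(* s_i^dagger : |x> |-> |x ∪ {i}> if i ∉ x, else 0 *)
Definition sdag (i : 'I_N) (v : state) : state :=
  [ffun y : {set 'I_N} => if i \in y then v (y :\ i) else 0].

(* s_i : |x> |-> |x \ {i}> if i ∈ x, else 0 *)
Definition slow (i : 'I_N) (v : state) : state :=
  [ffun y : {set 'I_N} => if i \in y then 0 else v (i |: y)].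

Definition string_op (J K : {set 'I_N}) (v : state) : state :=
  foldr sdag (foldr slow v (enum K)) (enum J).

(* An operator, given by its (unique) normal-ordered expansion
   H = sum_{J,K} c J K  s^dag_J s_K *)
Definition op_apply (c : {set 'I_N} -> {set 'I_N} -> C) (v : state) : state :=
  [ffun y => \sum_(J : {set 'I_N}) \sum_(K : {set 'I_N}) c J K * string_op J K v y].

Definition cdist (i j : 'I_N) : nat :=
  let a := if (i <= j)%N then (j - i)%N else (i - j)%N in minn a (N - a).

Definition klocal (k : nat) (c : {set 'I_N} -> {set 'I_N} -> C) : Prop :=
  forall J K, c J K != 0 -> (#|J :|: K| <= k)%N.

Definition range_le (R : nat) (c : {set 'I_N} -> {set 'I_N} -> C) : Prop :=
  forall J K, c J K != 0 ->
    forall i j, i \in J :|: K -> j \in J :|: K -> (cdist i j < R)%N.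

Definition vac : state := [ffun y => (y == set0)%:R].

Definition S2 (v : state) : state :=
  \sum_(i : 'I_N) sdag i (sdag (ordS i) v).

Definition Qp (p : nat) : state := iter p S2 vac.

End Chain.

(* Main.v *)
Require Import Defs.
From HB Require Import structures.
From mathcomp Require Import all_boot all_order all_algebra.
From mathcomp Require Import zify ring.
Import Order.TTheory GRing.Theory Num.Theory.
Local Open Scope ring_scope.
Set Implicit Arguments. Unset Strict Implicit. Unset Printing Implicit Defensive.

Arguments Qp : simpl never.

Section S.
Variable C : numClosedFieldType.
Variable N : nat.
Local Notation Q := (Qp C N).
Local Notation nx := (@ordS N).
Local Notation st := {set 'I_N}.

Lemma fold_sdag (s : seq 'I_N) (w : state C N) (y : st) : uniq s ->
  (foldr (@sdag C N) w s) y = if all (mem y) s then w (y :\: [set x in s]) else 0.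
Proof.
elim: s y => [|i s IH] y /=.
  by move=> _; congr (w _); apply/setP=> x; rewrite !inE.
case/andP=> iNs us; rewrite /sdag ffunE IH //.
case: (boolP (i \in y)) => iy //=.
have -> : all (mem (y :\ i)) s = all (mem y) s.
  apply: eq_in_all => x xs /=.
  have xi : x != i by apply: contraNneq iNs => <-.
  by rewrite !inE xi.
case: ifP => // _; congr (w _); apply/setP=> x; rewrite !inE.
by case: (x == i); case: (x \in s); case: (x \in y).
Qed.

Lemma fold_slow (s : seq 'I_N) (v : state C N) (z : st) : uniq s ->
  (foldr (@slow C N) v s) z = if all (fun x => x \notin z) s then v (z :|: [set x in s]) else 0.
Proof.
elim: s z => [|i s IH] z /=.
  by move=> _; congr (v _); apply/setP=> x; rewrite !inE orbF.
case/andP=> iNs us; rewrite /slow ffunE IH //.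
case: (boolP (i \in z)) => iz //=.
have -> : all (fun x => x \notin i |: z) s = all (fun x => x \notin z) s.
  apply: eq_in_all => x xs /=.
  have xi : x != i by apply: contraNneq iNs => <-.
  by rewrite !inE (negbTE xi).
case: ifP => // _; congr (v _); apply/setP=> x; rewrite !inE.
by case: (x == i); case: (x \in s); case: (x \in z).
Qed.

Lemma soE J K (v : state C N) y :
  string_op J K v y = if all (mem y) (enum J) && all (fun x => x \notin y :\: J) (enum K)
                      then v ((y :\: J) :|: K) else 0.
Proof.
rewrite /string_op fold_sdag ?enum_uniq // set_enum.
by case: ifP => //= _; rewrite fold_slow ?enum_uniq // set_enum.
Qed.

Lemma opE (c : st -> st -> C) (v : state C N) y : op_apply c v y = \sum_J \sum_K c J K * string_op J K v y.
Proof. by rewrite /op_apply ffunE. Qed.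

Definition dt q (y : st) (i : 'I_N) : C :=
  if (i \in y) && (nx i \in y) then Q q (y :\ i :\ nx i) else 0.

Hypothesis N1 : (1 < N)%N.

Lemma nx_neq (i : 'I_N) : nx i != i.
Proof.
apply/eqP => /(congr1 val) /=; case: i => i Hi /=.
case: (ltnP i.+1 N) => h; first by rewrite modn_small //; lia.
have -> : i.+1 = N by lia.
by rewrite modnn; lia.
Qed.

Lemma Qrec q y : Q q.+1 y = \sum_i dt q y i.
Proof.
rewrite /Qp iterS /S2 sum_ffunE; apply: eq_bigr => i _.
rewrite /dt /sdag !ffunE !inE (negbTE (nx_neq i)) /=.
by case: (i \in y); case: (nx i \in y).
Qed.

Lemma Q0E y : Q 0 y = (y == set0)%:R.
Proof. by rewrite /Qp /= /vac ffunE. Qed.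

Lemma Q0n (y : st) x : x \in y -> Q 0 y = 0.
Proof. by move=> xy; rewrite Q0E; case: eqP => // y0; rewrite y0 inE in xy. Qed.

Lemma Qge0 q y : 0 <= Q q y.
Proof.
elim: q y => [|q IH] y; first by rewrite Q0E ler0n.
rewrite Qrec; apply: sumr_ge0 => i _; rewrite /dt; case: ifP => // _.
Qed.

Lemma Qsupp q y : Q q y != 0 -> #|y| = (2 * q)%N.
Proof.
elim: q y => [|q IH] y.
  by rewrite Q0E; case: (eqVneq y set0) => [->|_]; rewrite ?cards0 ?eqxx.
rewrite Qrec => H.
have [i _ ] : exists2 i, true & dt q y i != 0.
  apply/exists_inP; apply: contraR H => /exists_inPn H.
  by apply/eqP; apply: big1 => i _; apply/eqP; apply: negbNE; apply: H.
rewrite /dt; case: ifP => [/andP[iy ny]|]; last by rewrite eqxx.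
move/IH; rewrite (cardsD1 i y) iy (cardsD1 (nx i) (y :\ i)) !inE ny (nx_neq i) /=.
by move=> ->; rewrite mulnS.
Qed.

Lemma Qiso q (W : st) s : s \in W -> ord_pred s \notin W -> nx s \notin W -> Q q W = 0.
Proof.
elim: q W => [|q IH] W sW pW nW; first exact: Q0n sW.
rewrite Qrec; apply: big1 => i _; rewrite /dt; case: ifP => // /andP[iW niW].
have si : s != i by apply: contraNneq nW => ->.
have sni : s != nx i.
  apply: contraNneq pW => ->; by rewrite ordSK.
apply: IH; rewrite !inE ?sW ?si ?sni //.
  by rewrite (negbTE pW) !andbF.
by rewrite (negbTE nW) !andbF.
Qed.


Ltac simpf := repeat (match goal with
 | H : is_true (?u != ?v) |- context[?u == ?v] => rewrite (negbTE H)
 | H : is_true (?u != ?v) |- context[?v == ?u] => rewrite (eq_sym v u) (negbTE H)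
 | H : is_true (?u \notin ?W) |- context[?u \in ?W] => rewrite (negbTE H)
 | H : is_true (?u \in ?W) |- context[?u \in ?W] => rewrite H
 end); rewrite ?eqxx ?orbF ?orbT ?andbT ?andbF ?andTb ?andFb ?orTb ?orFb.

Ltac splitx x := repeat (match goal with |- context[x == ?p] =>
   case: (eqVneq x p) => [->|?]; simpf end).
Ltac bcase := repeat (match goal with |- context[?x \in ?W] => case: (x \in W) end).
Ltac ssolve := apply/setP; let x := fresh "x" in intro x; rewrite !inE; simpf; splitx x; bcase; done.

Hypothesis N5 : (4 < N)%N.

Lemma val_iter k a : val (iter k nx a) = ((a + k) %% N)%N.
Proof.
elim: k => [|k IH] /=; first by rewrite addn0 modn_small.
by rewrite IH -addn1 modnDml addn1 addnS.
Qed.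

Lemma iter_neq j k a : (j < k)%N -> (k < N)%N -> iter j nx a != iter k nx a.
Proof.
move=> jk kN; apply/eqP => /(congr1 val); rewrite !val_iter => /eqP.
rewrite eqn_modDl !modn_small; lia.
Qed.

Lemma dist4 a : [/\ a != nx a, a != nx (nx a) & a != nx (nx (nx a))]
 /\ [/\ nx a != nx (nx a), nx a != nx (nx (nx a)) & nx (nx a) != nx (nx (nx a))]
 /\ [/\ a != nx (nx (nx (nx a))), nx a != nx (nx (nx (nx a))) & ord_pred a != nx (nx (nx a))].
Proof.
have h := fun j k => @iter_neq j k a.
have hN : forall k, (k <= 4)%N -> (k < N)%N by move=> k; lia.
have e1 : ord_pred a != nx (nx (nx a)).
  apply: (contra_neq _ (h 0 4%N erefl N5)) => e /=.
  by rewrite -e ord_predK.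
split; [split|split; split] => //.
- exact: (h 0 1 isT (hN 1 isT))%N.
- exact: (h 0 2 isT (hN 2 isT))%N.
- exact: (h 0 3 isT (hN 3 isT))%N.
- exact: (h 1 2 isT (hN 2 isT))%N.
- exact: (h 1 3 isT (hN 3 isT))%N.
- exact: (h 2 3 isT (hN 3 isT))%N.
- exact: (h 0 4 isT (hN 4 isT))%N.
- exact: (h 1 4 isT (hN 4 isT))%N.
Qed.

Lemma ordp_neq a : [/\ ord_pred a != a, ord_pred a != nx a & ord_pred a != nx (nx a)].
Proof.
have [[h01 h02 h03] [[h12 h13 h23] _]] := dist4 a.
split; [apply: contra h01|apply: contra h02|apply: contra h03] => /eqP e;
  by rewrite -{1}[a]ord_predK e.
Qed.

Definition dtW q (W : st) (A : st) (i : 'I_N) : C :=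
  if (i \in W) && (nx i \in W) then Q q ((W :\ i :\ nx i) :|: A) else 0.

Lemma sum_ind (X : C) a : \sum_(i : 'I_N) (i == a)%:R * X = X.
Proof.
rewrite (bigD1 a) //= eqxx mul1r big1 ?addr0 // => i /negbTE ->; by rewrite mul0r.
Qed.

Lemma pt1R q (W : st) a i : a \notin W -> nx a \notin W -> nx (nx a) \notin W ->
  dt q (W :|: [set a; nx a]) i = (i == a)%:R * Q q W + dtW q W [set a; nx a] i.
Proof.
move=> aW a1W a2W.
have [[h01 h02 h03] [[h12 h13 h23] _]] := dist4 a.
have [l0 l1 l2] := ordp_neq a.
have la := ord_predK a.
rewrite /dt /dtW.
case: (eqVneq i a) => [->|ia].
  rewrite !inE !eqxx ?orbT ?andbT /= (negbTE aW) /= mul1r addr0; congr (Q q _); ssolve.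
rewrite mul0r add0r.
case: (eqVneq i (ord_pred a)) => [->|il].
  rewrite la !inE !eqxx orbT andbT (negbTE aW) andbF /=.
  case: ifP => // lW; apply: (@Qiso _ _ (nx a)); rewrite !inE ?ordSK; simpf; by rewrite ?andbF.
case: (eqVneq i (nx a)) => [->|ia1].
  by rewrite !inE (negbTE a1W) (negbTE a2W); simpf.
have n1 : nx i != a by apply: contra il => /eqP <-; rewrite ordSK.
have n2 : nx i != nx a by apply: contra ia => /eqP /ordS_inj ->.
rewrite !inE; simpf; rewrite /=.
case: ifP => // _; congr (Q q _); ssolve.
Qed.


Lemma Q1R q (W : st) a : a \notin W -> nx a \notin W -> nx (nx a) \notin W ->
  Q q.+1 (W :|: [set a; nx a]) = q.+1%:R * Q q W.
Proof.
elim: q W => [|q IH] W aW a1W a2W;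
  rewrite Qrec (eq_bigr _ (fun i _ => pt1R _ i aW a1W a2W)) big_split /= sum_ind.
  rewrite big1 ?addr0 ?mul1r // => i _; rewrite /dtW; case: ifP => // _.
  by apply: (@Q0n _ a); rewrite !inE eqxx orbT.
rewrite (eq_bigr (fun i => q.+1%:R * dt q W i)); last first.
  move=> i _; rewrite /dtW /dt; case: ifP; rewrite ?mulr0 // => /andP[iW niW].
  by rewrite IH // !inE ?(negbTE aW) ?(negbTE a1W) ?(negbTE a2W) ?andbF.
rewrite -mulr_sumr -Qrec.
rewrite [in RHS]mulrSr. ring.
Qed.

Lemma pt1L q (W : st) a i : ord_pred a \notin W -> a \notin W -> nx a \notin W ->
  dt q (W :|: [set a; nx a]) i = (i == a)%:R * Q q W + dtW q W [set a; nx a] i.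
Proof.
move=> lW aW a1W.
have [[h01 h02 h03] [[h12 h13 h23] _]] := dist4 a.
have [l0 l1 l2] := ordp_neq a.
have la := ord_predK a.
rewrite /dt /dtW.
case: (eqVneq i a) => [->|ia].
  rewrite !inE !eqxx ?orbT ?andbT /= (negbTE aW) /= mul1r addr0; congr (Q q _); ssolve.
rewrite mul0r add0r.
case: (eqVneq i (ord_pred a)) => [->|il].
  by rewrite la !inE; simpf.
case: (eqVneq i (nx a)) => [->|ia1].
  rewrite !inE; simpf. case: ifP => // a2W.
  apply: (@Qiso _ _ a); rewrite !inE; simpf => //; rewrite ordSK; simpf.
have n1 : nx i != a by apply: contra il => /eqP <-; rewrite ordSK.
have n2 : nx i != nx a by apply: contra ia => /eqP /ordS_inj ->.
rewrite !inE; simpf; rewrite /=.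
case: ifP => // _; congr (Q q _); ssolve.
Qed.

Lemma Q1L q (W : st) a : ord_pred a \notin W -> a \notin W -> nx a \notin W ->
  Q q.+1 (W :|: [set a; nx a]) = q.+1%:R * Q q W.
Proof.
elim: q W => [|q IH] W lW aW a1W;
  rewrite Qrec (eq_bigr _ (fun i _ => pt1L _ i lW aW a1W)) big_split /= sum_ind.
  rewrite big1 ?addr0 ?mul1r // => i _; rewrite /dtW; case: ifP => // _.
  by apply: (@Q0n _ a); rewrite !inE eqxx orbT.
rewrite (eq_bigr (fun i => q.+1%:R * dt q W i)); last first.
  move=> i _; rewrite /dtW /dt; case: ifP; rewrite ?mulr0 // => /andP[iW niW].
  by rewrite IH // !inE ?(negbTE aW) ?(negbTE a1W) ?(negbTE lW) ?andbF.
rewrite -mulr_sumr -Qrec.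
rewrite [in RHS]mulrSr. ring.
Qed.


Lemma ifT' (T : Type) (x y : T) : (if true then x else y) = x. Proof. by []. Qed.
Lemma ifF' (T : Type) (x y : T) : (if false then x else y) = y. Proof. by []. Qed.
Lemma mulF (X : C) : (false)%:R * X = 0. Proof. by rewrite mul0r. Qed.
Lemma mulT (X : C) : (true)%:R * X = X. Proof. by rewrite mul1r. Qed.

Definition A3 a : st := [set a; nx a; nx (nx a)].

Lemma ptII q (Z : st) a i : a \notin Z -> nx a \notin Z -> nx (nx a) \notin Z ->
  (forall Z' : st, a \notin Z' -> nx a \notin Z' -> nx (nx a) \notin Z' ->
     Q q.+1 (Z' :|: A3 a) = q.+1%:R * (Q q (Z' :|: [set a]) + Q q (Z' :|: [set nx (nx a)]))) ->
  dt q.+1 (Z :|: A3 a) i = (i == a)%:R * Q q.+1 (Z :|: [set nx (nx a)])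
     + (i == nx a)%:R * Q q.+1 (Z :|: [set a])
     + q.+1%:R * (dt q (Z :|: [set a]) i + dt q (Z :|: [set nx (nx a)]) i).
Proof.
move=> aW a1W a2W IH.
have [[h01 h02 h03] [[h12 h13 h23] [h04 h14 l3]]] := dist4 a.
have [l0 l1 l2] := ordp_neq a.
have la := ord_predK a.
rewrite /dt /A3.
case: (eqVneq i a) => [->|ia].
  rewrite !inE; simpf; rewrite mul1r mul0r !addr0 mulr0 addr0; congr (Q _ _); ssolve.
case: (eqVneq i (ord_pred a)) => [->|il].
  rewrite la !inE; simpf; rewrite !mulF !add0r.
  case: ifP => lZ; rewrite ?addr0 ?mulr0 //.
  rewrite (_ : _ :\ _ :\ _ = (Z :\ ord_pred a) :|: [set nx a; nx (nx a)]); last by ssolve.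
  rewrite Q1L ?ordSK ?inE; simpf => //.
  congr (_ * Q q _); ssolve.
case: (eqVneq i (nx a)) => [->|ia1].
  rewrite !inE; simpf; rewrite mul1r mul0r add0r !addr0 mulr0 addr0; congr (Q _ _); ssolve.
case: (eqVneq i (nx (nx a))) => [->|ia2].
  rewrite !inE; simpf; rewrite !mulF !add0r.
  case: ifP => a3Z; rewrite ?add0r ?mulr0 //.
  rewrite (_ : _ :\ _ :\ _ = (Z :\ nx (nx (nx a))) :|: [set a; nx a]); last by ssolve.
  rewrite Q1R ?inE; simpf => //.
  congr (_ * Q q _); ssolve.
have n1 : nx i != a by apply: contra il => /eqP <-; rewrite ordSK.
have n2 : nx i != nx a by apply: contra ia => /eqP /ordS_inj ->.
have n3 : nx i != nx (nx a) by apply: contra ia1 => /eqP /ordS_inj ->.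
rewrite !inE; simpf; rewrite !mulF !add0r.
have [/andP[iZ niZ]|nZ] := boolP ((i \in Z) && (nx i \in Z)); rewrite /=; last by rewrite addr0 mulr0.
rewrite (_ : _ :\ _ :\ _ = (Z :\ i :\ nx i) :|: A3 a); last by rewrite /A3; ssolve.
rewrite IH ?inE; simpf => //.
congr (_ * (Q q _ + Q q _)); ssolve.
Qed.

Lemma QII q (Z : st) a : a \notin Z -> nx a \notin Z -> nx (nx a) \notin Z ->
  Q q.+1 (Z :|: A3 a) = q.+1%:R * (Q q (Z :|: [set a]) + Q q (Z :|: [set nx (nx a)])).
Proof.
have [[h01 h02 h03] [[h12 h13 h23] [h04 h14 l3]]] := dist4 a.
have [l0 l1 l2] := ordp_neq a.
elim: q Z => [|q IH] Z aW a1W a2W.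
  rewrite Qrec big1; last first.
    move=> i _; rewrite /dt; case: ifP => // _.
    case: (eqVneq i a) => [->|ia].
      by apply: (@Q0n _ (nx (nx a))); rewrite /A3 !inE; simpf.
    case: (eqVneq (nx i) a) => [e|nia].
      have ei : i = ord_pred a by rewrite -e ordSK.
      by apply: (@Q0n _ (nx (nx a))); rewrite /A3 !inE e ei; simpf.
    by apply: (@Q0n _ a); rewrite /A3 !inE; simpf.
  by rewrite (@Q0n _ a) ?(@Q0n _ (nx (nx a))) ?addr0 ?mulr0 // !inE eqxx orbT.
rewrite Qrec (eq_bigr _ (fun i _ => ptII i aW a1W a2W IH)).
rewrite !big_split /= !sum_ind -mulr_sumr big_split /= -!Qrec.
rewrite [(q.+2)%:R]mulrSr. ring.
Qed.


Definition avoid (A B : st) := forall x, x \in A -> x \notin B.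

Definition relR (Rg f : st) (xs : seq st) :=
  [/\ {subset f <= Rg}, forall x, x \in xs -> {subset x <= Rg} &
   forall (Z : st) q, avoid Rg Z -> Q q.+1 (Z :|: f) = q.+1%:R * \sum_(x <- xs) Q q (Z :|: x)].

Definition cnd (J K y : st) := all (mem y) (enum J) && all (fun x => x \notin y :\: J) (enum K).

Lemma cndU Rg J K (Z B : st) : avoid Rg J -> avoid Rg K -> {subset B <= Rg} ->
  cnd J K (Z :|: B) = cnd J K Z /\ ((Z :|: B) :\: J) :|: K = ((Z :\: J) :|: K) :|: B.
Proof.
move=> aJ aK sB.
have nJ x : x \in J -> x \notin B.
  by move=> xJ; apply/negP => xB; have := aJ x (sB x xB); rewrite xJ.
have nK x : x \in K -> x \notin B.
  by move=> xK; apply/negP => xB; have := aK x (sB x xB); rewrite xK.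
split.
  rewrite /cnd; congr (_ && _); apply: eq_in_all => x; rewrite mem_enum => xJ /=.
    by rewrite inE (negbTE (nJ x xJ)) orbF.
  by rewrite !inE (negbTE (nK x xJ)) orbF.
apply/setP => x; rewrite !inE.
case xB: (x \in B); last by rewrite !orbF.
have xR := sB x xB.
by rewrite (negbTE (aJ x xR)) (negbTE (aK x xR)) /= !orbT.
Qed.

Lemma TW Rg f xs J K (Z : st) q : relR Rg f xs -> avoid Rg J -> avoid Rg K -> avoid Rg Z ->
  string_op J K (Q q.+1) (Z :|: f) = q.+1%:R * \sum_(x <- xs) string_op J K (Q q) (Z :|: x).
Proof.
case=> fR xR rel aJ aK aZ.
have [c1 e1] := cndU Z aJ aK fR.
rewrite soE -/(cnd J K (Z :|: f)) c1 e1.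
rewrite big_seq (eq_bigr (fun x => if cnd J K Z then Q q (((Z :\: J) :|: K) :|: x) else 0)); last first.
  move=> x xx; have [c2 e2] := cndU Z aJ aK (xR x xx).
  by rewrite soE -/(cnd J K (Z :|: x)) c2 e2.
rewrite -big_seq; case: (cnd J K Z); last by rewrite big1 ?mulr0.
apply: rel => x xRg; rewrite !inE negb_or (aK x xRg) andbT negb_and (aZ x xRg) orbT //.
Qed.


Lemma sum3 (F : st -> st -> st -> C) (xs : seq st) :
  \sum_(J : st) \sum_(K : st) \sum_(x <- xs) F J K x = \sum_(x <- xs) \sum_(J : st) \sum_(K : st) F J K x.
Proof.
rewrite (eq_bigr (fun J => \sum_(x <- xs) \sum_(K : st) F J K x)); last first.
  by move=> J _; rewrite exchange_big.
by rewrite exchange_big.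
Qed.

Lemma sum4 (F : st -> st -> st -> st -> C) (xs ys : seq st) :
  \sum_(J : st) \sum_(K : st) \sum_(x <- xs) \sum_(y <- ys) F J K x y =
  \sum_(x <- xs) \sum_(y <- ys) \sum_(J : st) \sum_(K : st) F J K x y.
Proof.
rewrite sum3; apply: eq_bigr => x _; by rewrite sum3.
Qed.

Lemma sumK2 (a : C) (F : st -> st -> C) :
  \sum_(J : st) \sum_(K : st) a * F J K = a * \sum_(J : st) \sum_(K : st) F J K.
Proof. rewrite mulr_sumr; apply: eq_bigr => J _; by rewrite mulr_sumr. Qed.

Lemma fin_alg (E2 E1 E0 V s1 s2 s3 P2 P1 : C) :
  E2 * V - P2 * (E1 * s1) - P2 * (E1 * s2) + P2 * P1 * (E0 * s3) = 0 ->
  V = P2 * s1 -> V = P2 * s2 -> s2 = P1 * s3 -> (E2 - 2%:R * E1 + E0) * V = 0.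
Proof.
move=> H h1 h2 h3; rewrite -H.
transitivity (E2 * V - E1 * (P2 * s1) - E1 * (P2 * s2) + E0 * (P2 * (P1 * s3))).
  rewrite -h1 -h3 -h2; ring.
ring.
Qed.

Lemma main_comb (c : st -> st -> C) (E : nat -> C) (L : nat)
  (eig : forall p, (p <= L)%N -> forall y, op_apply c (Q p) y = E p * Q p y)
  RgA fA xsA RgB fB xsB (X : st) P :
  relR RgA fA xsA -> relR RgB fB xsB -> avoid RgA RgB -> avoid RgB RgA ->
  avoid RgA X -> avoid RgB X ->
  (forall J K, c J K != 0 -> (avoid RgA J /\ avoid RgA K) \/ (avoid RgB J /\ avoid RgB K)) ->
  (P.+2 <= L)%N -> Q P.+2 (X :|: fA :|: fB) != 0 ->
  E P.+2 - 2%:R * E P.+1 + E P = 0.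
Proof.
move=> rA rB dAB dBA aAX aBX loc PL V0.
have rA' := rA; have rB' := rB.
case: rA' => fAR xAR relA; case: rB' => fBR xBR relB.
pose y a b := X :|: a :|: b.
pose T J K p Y := c J K * string_op J K (Q p) Y.
pose P2 : C := P.+2%:R; pose P1 : C := P.+1%:R.
pose comb J K := T J K P.+2 (y fA fB) - P2 * \sum_(xb <- xsB) T J K P.+1 (y fA xb)
   - P2 * \sum_(xa <- xsA) T J K P.+1 (y xa fB)
   + P2 * P1 * \sum_(xa <- xsA) \sum_(xb <- xsB) T J K P (y xa xb).
have avB (a : st) : {subset a <= RgA} -> avoid RgB (X :|: a).
  move=> sa x xR; rewrite inE negb_or (aBX x xR) /=.
  by apply/negP => xa; have := dBA x xR; rewrite (sa x xa).
have avA (b : st) : {subset b <= RgB} -> avoid RgA (X :|: b).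
  move=> sb x xR; rewrite inE negb_or (aAX x xR) /=.
  by apply/negP => xb; have := dAB x xR; rewrite (sb x xb).
have yC (a b : st) : y a b = X :|: b :|: a by rewrite /y setUAC.
have comb0 J K : comb J K = 0.
  have [cz|cnz] := eqVneq (c J K) 0.
    rewrite /comb /T cz !mul0r !big1 ?mulr0 ?subrr ?addr0 // => *; rewrite ?big1 // => *; by rewrite mul0r.
  case: (loc J K cnz) => [[aJ aK]|[aJ aK]].
  -
    have h1 : T J K P.+2 (y fA fB) = P2 * \sum_(xa <- xsA) T J K P.+1 (y xa fB).
      rewrite /T yC (TW _ rA aJ aK (avA _ fBR)) !mulr_sumr.
      by apply: eq_bigr => xa _; rewrite yC mulrCA.
    have h2 : \sum_(xb <- xsB) T J K P.+1 (y fA xb)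
            = P1 * \sum_(xb <- xsB) \sum_(xa <- xsA) T J K P (y xa xb).
      rewrite mulr_sumr big_seq [in RHS]big_seq; apply: eq_bigr => xb xbB.
      rewrite /T yC (TW _ rA aJ aK (avA _ (xBR xb xbB))) !mulr_sumr.
      by apply: eq_bigr => xa _; rewrite yC mulrCA.
    rewrite /comb h1 h2 (exchange_big_dep xpredT) //=.
    rewrite /P1 /P2; ring.
  -
    have h1 : T J K P.+2 (y fA fB) = P2 * \sum_(xb <- xsB) T J K P.+1 (y fA xb).
      rewrite /T (TW _ rB aJ aK (avB _ fAR)) !mulr_sumr.
      by apply: eq_bigr => xb _; rewrite mulrCA.
    have h2 : \sum_(xa <- xsA) T J K P.+1 (y xa fB)
            = P1 * \sum_(xa <- xsA) \sum_(xb <- xsB) T J K P (y xa xb).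
      rewrite mulr_sumr big_seq [in RHS]big_seq; apply: eq_bigr => xa xaA.
      rewrite /T (TW _ rB aJ aK (avB _ (xAR xa xaA))) !mulr_sumr.
      by apply: eq_bigr => xb _; rewrite mulrCA.
    rewrite /comb h1 h2.
    rewrite /P1 /P2; ring.
have tot : \sum_(J : st) \sum_(K : st) comb J K = 0 by rewrite big1 // => J _; rewrite big1.
have G p Y : (p <= L)%N -> \sum_(J : st) \sum_(K : st) T J K p Y = E p * Q p Y.
  by move=> pL; rewrite -eig // opE.
move: tot; rewrite /comb.
under eq_bigr => J _ do rewrite big_split /= sumrB sumrB.
rewrite big_split /= sumrB sumrB.
rewrite !sumK2 sum4 !sum3.
have G2 Y : \sum_(J : st) \sum_(K : st) T J K P.+2 Y = E P.+2 * Q P.+2 Y by apply: G.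
have G1 Y : \sum_(J : st) \sum_(K : st) T J K P.+1 Y = E P.+1 * Q P.+1 Y by apply: G; lia.
have G0 Y : \sum_(J : st) \sum_(K : st) T J K P Y = E P * Q P Y by apply: G; lia.
rewrite G2.
have G1a : \sum_(xb <- xsB) \sum_(J : st) \sum_(K : st) T J K P.+1 (y fA xb)
   = E P.+1 * \sum_(xb <- xsB) Q P.+1 (y fA xb).
  rewrite mulr_sumr; apply: eq_bigr => xb _; apply: G1.
have G1b : \sum_(xa <- xsA) \sum_(J : st) \sum_(K : st) T J K P.+1 (y xa fB)
   = E P.+1 * \sum_(xa <- xsA) Q P.+1 (y xa fB).
  rewrite mulr_sumr; apply: eq_bigr => xa _; apply: G1.
have G0s : \sum_(xa <- xsA) \sum_(xb <- xsB) \sum_(J : st) \sum_(K : st) T J K P (y xa xb)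
   = E P * \sum_(xa <- xsA) \sum_(xb <- xsB) Q P (y xa xb).
  rewrite mulr_sumr; apply: eq_bigr => xa _; rewrite mulr_sumr; apply: eq_bigr => xb _; apply: G0.
rewrite G1a G1b G0s.
have hV1 : Q P.+2 (y fA fB) = P2 * \sum_(xb <- xsB) Q P.+1 (y fA xb) by rewrite /y relB //; apply: avB.
have hV2 : Q P.+2 (y fA fB) = P2 * \sum_(xa <- xsA) Q P.+1 (y xa fB).
  rewrite yC relA; last by apply: avA.
  by congr (_ * _); apply: eq_bigr => xa _; rewrite yC.
have hs : \sum_(xa <- xsA) Q P.+1 (y xa fB) = P1 * \sum_(xa <- xsA) \sum_(xb <- xsB) Q P (y xa xb).
  rewrite mulr_sumr big_seq [in RHS]big_seq; apply: eq_bigr => xa xaA.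
  by rewrite /y relB //; apply: avB; apply: xAR.
move=> H; have := fin_alg H hV1 hV2 hs.
by move/eqP; rewrite mulf_eq0 (negbTE V0) orbF => /eqP.
Qed.

End S.

Section T.
Variable C : numClosedFieldType.
Variable n R : nat.
Hypothesis hRn : (2 * R + 10 <= n)%N.
Let n10 : (10 <= n)%N. Proof. lia. Qed.
Local Notation N := n.+1.
Local Notation Q := (Qp C N).
Local Notation nx := (@ordS N).
Local Notation st := {set 'I_N}.

Let N1 : (1 < N)%N. Proof. lia. Qed.
Let N5 : (4 < N)%N. Proof. lia. Qed.

Definition s (k : nat) : 'I_N := inord k.

Lemma val_s k : (k <= n)%N -> nat_of_ord (s k) = k.
Proof. by move=> h; exact: inordK. Qed.

Lemma eq_s (x : 'I_N) k : (k <= n)%N -> (x == s k) = (nat_of_ord x == k).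
Proof. by move=> h; rewrite -val_eqE /= val_s. Qed.

Lemma nx_s k : (k < n)%N -> nx (s k) = s k.+1.
Proof.
move=> h; apply: val_inj; rewrite /= val_s ?val_s ?modn_small //; lia.
Qed.

Definition itv lo hi : st := [set x : 'I_N | (lo <= x < hi)%N].

Lemma grow j k lo (W : st) : (forall w, w \in W -> (nat_of_ord w < lo)%N) -> (lo + 2 * k <= n)%N ->
  Q j W != 0 -> Q (j + k) (W :|: itv lo (lo + 2 * k)) != 0.
Proof.
move=> Wlo; elim: k => [|k IH] hk QW.
  rewrite addn0 (_ : W :|: _ = W) //; apply/setP => x; rewrite !inE; lia.
have h1 : (lo + 2 * k.+1 <= n)%N by [].
rewrite (_ : W :|: _ = (W :|: itv lo (lo + 2 * k)) :|: [set s (lo + 2 * k); nx (s (lo + 2 * k))]); last first.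
  apply/setP => x; rewrite nx_s; last by lia.
  rewrite !inE !eq_s; lia.
rewrite addnS Q1R //.
- rewrite mulf_neq0 // ?pnatr_eq0 //; apply: IH; lia.
- rewrite !inE negb_or.
  apply/andP; split; first by apply/negP => /Wlo; rewrite val_s; lia.
  rewrite val_s; lia.
- rewrite nx_s; last by lia.
  rewrite !inE negb_or.
  apply/andP; split; first by apply/negP => /Wlo; rewrite val_s; lia.
  rewrite val_s; lia.
- rewrite !nx_s; try lia.
  rewrite !inE negb_or.
  apply/andP; split; first by apply/negP => /Wlo; rewrite val_s; lia.
  rewrite val_s; lia.
Qed.

Lemma A3s k : (k.+2 <= n)%N -> A3 (s k) = [set s k; s k.+1; s k.+2].
Proof. by move=> h; rewrite /A3 !nx_s //; lia. Qed.

Lemma memA3 (x : 'I_N) k : (k.+2 <= n)%N -> (x \in A3 (s k)) = (k <= x <= k.+2)%N.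
Proof. move=> h; rewrite A3s // !inE !eq_s; lia. Qed.

Lemma relI a : relR C (A3 a) [set a; nx a] [:: set0].
Proof.
split.
- by move=> x; rewrite /A3 !inE => /orP[] ->; rewrite ?orbT.
- by move=> x; rewrite inE => /eqP -> y; rewrite inE.
move=> Z q aZ; rewrite big_cons big_nil addr0 setU0 Q1R //;
  apply: aZ; rewrite /A3 !inE eqxx ?orbT //.
Qed.

Lemma relII a : relR C (A3 a) (A3 a) [:: [set a]; [set nx (nx a)]].
Proof.
split.
- by [].
- by move=> x; rewrite !inE => /orP[] /eqP -> y; rewrite !inE => /eqP ->; rewrite eqxx ?orbT.
move=> Z q aZ; rewrite !big_cons big_nil addr0 QII //;
  apply: aZ; rewrite /A3 !inE eqxx ?orbT //.
Qed.

Let m := (R + 3)%N.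

Lemma far (u v : 'I_N) : u \in A3 (s 0) -> v \in A3 (s m) -> (R <= cdist u v)%N.
Proof.
rewrite !memA3 /m; try lia.
move=> hu hv; rewrite /cdist; case: ifP => h; lia.
Qed.

Lemma locAB (c : st -> st -> C) : range_le R c -> forall J K, c J K != 0 ->
  (avoid (A3 (s 0)) J /\ avoid (A3 (s 0)) K) \/ (avoid (A3 (s m)) J /\ avoid (A3 (s m)) K).
Proof.
move=> rng J K cJK.
case: (boolP [exists u, (u \in A3 (s 0)) && (u \in J :|: K)]) => [/existsP[u /andP[uA uJK]] | /existsPn nA].
  right; split => v vB; apply/negP => vJ;
    have := rng J K cJK u v uJK; rewrite !inE vJ ?orbT => /(_ isT); have := far uA vB; lia.
left; split => v vA; apply/negP => vJ; have := nA v; by rewrite vA !inE vJ ?orbT.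
Qed.

Lemma dAB : avoid (A3 (s 0)) (A3 (s m)).
Proof. move=> x; rewrite !memA3 /m; lia. Qed.
Lemma dBA : avoid (A3 (s m)) (A3 (s 0)).
Proof. move=> x; rewrite !memA3 /m; lia. Qed.

Lemma setDU_sub (Y A : st) : {subset A <= Y} -> (Y :\: A) :|: A = Y.
Proof.
move=> sA; apply/setP => x; rewrite !inE.
case: (boolP (x \in A)) => xA; first by rewrite orbT (sA x xA).
by rewrite orbF.
Qed.

Lemma Q00 : Q 0 set0 != 0.
Proof. by rewrite Q0E eqxx oner_neq0. Qed.

Lemma VI p : (m + 3 + 2 * p <= n)%N ->
  Q p.+2 (itv (m + 3) (m + 3 + 2 * p) :|: [set s 0; nx (s 0)] :|: [set s m; nx (s m)]) != 0.
Proof.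
move=> hp.
have e : itv (m + 3) (m + 3 + 2 * p) :|: [set s 0; nx (s 0)] :|: [set s m; nx (s m)]
   = ((set0 :|: itv 0 (0 + 2 * 1)) :|: itv m (m + 2 * 1)) :|: itv (m + 3) (m + 3 + 2 * p).
  apply/setP => x; rewrite !nx_s /m; try lia.
  rewrite !inE !eq_s; lia.
rewrite e (_ : p.+2 = 0 + 1 + 1 + p)%N; last by lia.
apply: grow; [by move=> w; rewrite !inE /m; lia | by [] |].
apply: grow; [by move=> w; rewrite !inE /m; lia | by rewrite /m; lia |].
apply: grow; [by move=> w; rewrite !inE | by lia |].
exact: Q00.
Qed.

Lemma VIIa p : (2 * p.+2 <= n)%N -> Q p.+2 (itv 0 (2 * p.+2)) != 0.
Proof.
move=> hp.
have := @grow 0 p.+2 0 set0 _ _ Q00.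
by rewrite add0n set0U; apply => //; move=> w; rewrite inE.
Qed.

Lemma VIIb p : (2 * p.+2 = n.+1)%N -> Q p.+2 setT != 0.
Proof.
move=> hp.
have hn : (n.-1 < n)%N by lia.
rewrite (Qrec C N1) (bigD1 (s n.-1)) //=.
rewrite {1}/dt !inE /= nx_s // (_ : n.-1.+1 = n); last by lia.
rewrite (_ : setT :\ s n.-1 :\ s n = set0 :|: itv 0 (0 + 2 * p.+1)); last first.
  apply/setP => x; rewrite !inE !eq_s; try lia.
  by have := ltn_ord x; lia.
set t := Q _ _.
have tpos : 0 < t.
  rewrite lt0r Qge0 // andbT /t.
  have := @grow 0 p.+1 0 set0 _ _ Q00.
  by rewrite add0n; apply => //; [move=> w; rewrite inE | lia].
apply: lt0r_neq0; apply: ltr_wpDr => //.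
apply: sumr_ge0 => i _; rewrite /dt; case: ifP => // _; exact: Qge0.
Qed.

Lemma sdiff (c : st -> st -> C) (E : nat -> C) (L : nat)
  (eig : forall p, (p <= L)%N -> forall y, op_apply c (Q p) y = E p * Q p y)
  (rng : range_le R c) p :
  (p.+2 <= L)%N -> (2 * p.+2 <= n.+1)%N -> E p.+2 - 2%:R * E p.+1 + E p = 0.
Proof.
move=> pL p2.
case: (leqP (m + 3) (2 * p.+2)) => h.
  pose Y := if (2 * p.+2 <= n)%N then itv 0 (2 * p.+2) else setT.
  apply: (main_comb N1 N5 eig (relII _) (relII _) dAB dBA _ _ (locAB rng) pL
           (X := Y :\: (A3 (s 0) :|: A3 (s m)))).
  - by move=> x xA; rewrite in_setD in_setU xA.
  - by move=> x xA; rewrite in_setD in_setU xA orbT.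
  rewrite -setUA setDU_sub; last first.
    move=> x; rewrite /Y; case: ifP => _; last by rewrite inE.
    rewrite in_setU !memA3 /m ?inE; lia.
  rewrite /Y; case: ifP => h2; first exact: VIIa.
  apply: VIIb; lia.
apply: (main_comb N1 N5 eig (relI _) (relI _) dAB dBA _ _ (locAB rng) pL
         (X := itv (m + 3) (m + 3 + 2 * p))).
- by move=> x; rewrite memA3 /m ?inE; lia.
- by move=> x; rewrite memA3 /m ?inE; lia.
apply: VI; rewrite /m; lia.
Qed.

End T.

Unset Implicit Arguments.

Theorem corollary1 (C : numClosedFieldType) (k R : nat) :
  (0 < k)%N -> (0 < R)%N ->
  exists N0 : nat, forall N : nat, (N0 < N)%N ->
  forall (c : {set 'I_N} -> {set 'I_N} -> C),
    klocal k c -> range_le R c ->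
  forall (E : nat -> C) (L : nat),
    Qp C N L != 0 ->
    (forall p, (L < p)%N -> Qp C N p = 0) ->
    (forall p, (p <= L)%N -> forall y, op_apply c (Qp C N p) y = E p * Qp C N p y) ->
  exists Om om : C, forall p, (p <= L)%N -> E p = Om + om * p%:R.
Proof.
move=> _ _; exists (2 * R + 10)%N => N.
case: N => [//|n] HN c _ rng E L QL Qz eig.
have hRn : (2 * R + 10 <= n)%N by lia.
have N1 : (1 < n.+1)%N by lia.
have L2 : (2 * L <= n.+1)%N.
  case: (pickP (fun y => Qp C n.+1 L y != 0)) => [y Hy | H].
    rewrite -(Qsupp N1 Hy).
    by have := subset_leq_card (subsetT y); rewrite cardsT card_ord.
  case/eqP: QL; apply/ffunP => y; rewrite ffunE; by move/negbFE/eqP: (H y).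
have sd p : (p.+2 <= L)%N -> E p.+2 - 2%:R * E p.+1 + E p = 0.
  move=> h; apply: (sdiff hRn eig rng h); lia.
exists (E 0), (E 1 - E 0).
elim/ltn_ind => p IH pL.
case: p IH pL => [|[|p]] IH pL.
- by rewrite mulr0 addr0.
- by rewrite mulr1 addrC subrK.
transitivity (2%:R * E p.+1 - E p).
  apply/eqP; rewrite -subr_eq0 -(sd p pL); apply/eqP; ring.
rewrite (IH p.+1) ?(IH p) //; try lia.
ring.
Qed.
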